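(* Let $v,w,\Delta$ be nonnegative integers with $w\ge1$ and $v+\Delta\le w$. Then for every $0<\lambda\le1$, \[ \varPhi_{v,\Delta}(\lambda)\le\left(\frac{(1+\lambda)^w}{1+\lambda^w}\right)^{v/w}. \]
   Context: For nonnegative integers $v,\Delta$ and $0<\lambda\le 1$, the local factor is \[ \varPhi_{v,\Delta}(\lambda)=\frac{\sum_{t=0}^v\binom vt\lambda^{\min\{t,\,\Delta+v-t\}}}{1+\lambda^{\Delta}}. \] *)

(* Defs.v *)
From Stdlib Require Import Reals Lia.
Open Scope R_scope.

(* Local factor Phi_{v,Delta}(lambda) =
   (sum_{t=0}^v C(v,t) lambda^{min(t, Delta+v-t)}) / (1 + lambda^Delta).
   Here Delta + v - t is a natural with t <= v, so truncated subtraction is exact. *)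
Definition Phi (v Delta : nat) (lambda : R) : R :=
  sum_f_R0 (fun t => Binomial.C v t * lambda ^ (Nat.min t (Delta + v - t))) v
  / (1 + lambda ^ Delta).

(* Main.v *)
Require Import Defs.
From Stdlib Require Import Reals Lra Lia.
Open Scope R_scope.

Lemma pow_anti L a b : 0 < L -> L <= 1 -> (a <= b)%nat -> L^b <= L^a.
Proof.
  intros HL HL1 Hab. replace b with (a + (b-a))%nat by lia. rewrite pow_add.
  rewrite <- (Rmult_1_r (L^a)) at 2. apply Rmult_le_compat_l.
  - apply pow_le; lra.
  - rewrite <- (pow1 (b-a)). apply pow_incr; lra.
Qed.

Lemma ln_le_sub1 z : 0 < z -> ln z <= z - 1.
Proof. intros Hz. pose proof (exp_ineq1_le (ln z)). rewrite exp_ln in H; lra. Qed.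

Lemma bern x th : 0 <= x -> 0 <= th <= 1 -> Rpower (1+x) th <= 1 + th*x.
Proof.
  intros Hx Hth. unfold Rpower. set (a := 1 + th*x).
  assert (Ha : 0 < a) by (unfold a; nra).
  assert (H1 := ln_le_sub1 ((1+x) * /a) ltac:(apply Rmult_lt_0_compat; [lra| apply Rinv_0_lt_compat; lra])).
  assert (H2 := ln_le_sub1 (/a) ltac:(apply Rinv_0_lt_compat; lra)).
  rewrite ln_mult in H1 by (try apply Rinv_0_lt_compat; lra).
  rewrite ln_Rinv in H1, H2 by lra.
  assert (E : th*((1+x)*/a - 1) + (1-th)*(/a - 1) = 0) by (unfold a in *; field; lra).
  assert (K : th * ln (1+x) <= ln a).
  { assert (th*(ln (1+x) + - ln a) <= th*((1+x)*/a - 1)) by (apply Rmult_le_compat_l; lra).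
    assert ((1-th)*(- ln a) <= (1-th)*(/a - 1)) by (apply Rmult_le_compat_l; lra).
    nra. }
  destruct (Rle_lt_or_eq_dec _ _ K) as [Hl|He].
  - left. rewrite <- (exp_ln a) by lra. apply exp_increasing. exact Hl.
  - rewrite He, exp_ln by lra. lra.
Qed.

Lemma div_le_div S d P a : 0 < d -> 0 < a -> S*a <= P*d -> S/d <= P/a.
Proof.
  intros Hd Ha H. unfold Rdiv. apply Rmult_le_reg_r with (d*a); [nra|].
  replace (S*/d*(d*a)) with (S*a) by (field; lra).
  replace (P*/a*(d*a)) with (P*d) by (field; lra). lra.
Qed.

Theorem lemma10 (v w Delta : nat) (lambda : R) :
  (1 <= w)%nat -> (v + Delta <= w)%nat ->
  0 < lambda -> lambda <= 1 ->
  Phi v Delta lambda <=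
  Rpower ((1 + lambda) ^ w / (1 + lambda ^ w)) (INR v / INR w).
Proof.
  intros Hw Hvw HL HL1.
  set (L := lambda) in *.
  set (S := sum_f_R0 (fun t => C v t * L ^ (Nat.min t (Delta + v - t))) v).
  set (th := INR v / INR w).
  assert (Hwpos : 0 < INR w) by (apply lt_0_INR; lia).
  assert (Hvw' : INR v <= INR w) by (apply le_INR; lia).
  assert (Hv0 : 0 <= INR v) by apply pos_INR.
  assert (Hth : 0 <= th <= 1).
  { unfold th; split.
    - apply Rmult_le_pos; [lra| left; apply Rinv_0_lt_compat; lra].
    - apply Rmult_le_reg_r with (INR w); [lra|]. unfold Rdiv.
      rewrite Rmult_assoc, Rinv_l by lra. lra. }
  assert (HxL : 0 < L ^ w) by (apply pow_lt; lra).
  assert (HLD : 0 < L ^ Delta) by (apply pow_lt; lra).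
  assert (H1L : 0 < (1+L)^v) by (apply pow_lt; lra).
  assert (H1Lw : 0 < (1+L)^w) by (apply pow_lt; lra).
  set (a := 1 + th * L^w).
  assert (Ha : 0 < a) by (unfold a; nra).
  assert (Key : INR w * S + INR v * L^w * S <= INR w * ((1+L)^v + L^Delta * (1+L)^v)).
  { assert (B1 : (1+L)^v = sum_f_R0 (fun i => C v i * L^i) v).
    { rewrite Rplus_comm, binomial. apply sum_eq. intros i Hi.
      rewrite pow1. ring. }
    assert (B2 : L^Delta * (1+L)^v = sum_f_R0 (fun i => C v i * L^(Delta + v - i)) v).
    { rewrite binomial, scal_sum. apply sum_eq. intros i Hi.
      rewrite pow1. replace (Delta + v - i)%nat with (Delta + (v - i))%nat by lia.
      rewrite pow_add. ring. }
    rewrite B2, B1, <- plus_sum. unfold S.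
    rewrite !scal_sum, <- plus_sum.
    apply sum_Rle. intros t Ht.
    assert (HC : 0 <= C v t).
    { unfold C. apply Rmult_le_pos; [apply pos_INR|].
      left; apply Rinv_0_lt_compat. apply Rmult_lt_0_compat; apply INR_fact_lt_0. }
    destruct (Nat.le_ge_cases t (Delta + v - t)) as [Hm|Hm].
    - rewrite Nat.min_l by lia.
      assert (P : L^w * L^t <= L^(Delta+v-t)).
      { rewrite <- pow_add. apply pow_anti; lia || lra. }
      assert (P2 : INR v * (L^w * L^t) <= INR w * L^(Delta+v-t)).
      { apply Rmult_le_compat; try lra. apply Rmult_le_pos; apply pow_le; lra. }
      assert (P3 : C v t * (INR v * (L^w * L^t)) <= C v t * (INR w * L^(Delta+v-t)))
        by (apply Rmult_le_compat_l; lra).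
      nra.
    - rewrite Nat.min_r by lia.
      assert (P : L^w * L^(Delta+v-t) <= L^t).
      { rewrite <- pow_add. apply pow_anti; lia || lra. }
      assert (P2 : INR v * (L^w * L^(Delta+v-t)) <= INR w * L^t).
      { apply Rmult_le_compat; try lra. apply Rmult_le_pos; apply pow_le; lra. }
      assert (P3 : C v t * (INR v * (L^w * L^(Delta+v-t))) <= C v t * (INR w * L^t))
        by (apply Rmult_le_compat_l; lra).
      nra. }
  assert (Key2 : S * a <= (1+L)^v * (1 + L^Delta)).
  { apply Rmult_le_reg_l with (INR w); [lra|].
    replace (INR w * (S * a)) with (INR w * S + INR v * L^w * S)
      by (unfold a, th; field; lra).
    lra. }
  assert (R1 : Rpower ((1 + L) ^ w / (1 + L ^ w)) th * Rpower (1 + L^w) th = (1+L)^v).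
  { rewrite Rpower_mult_distr.
    - replace ((1 + L) ^ w / (1 + L ^ w) * (1 + L ^ w)) with ((1+L)^w) by (field; lra).
      rewrite <- Rpower_pow by lra. rewrite Rpower_mult.
      replace (INR w * th) with (INR v) by (unfold th; field; lra).
      apply Rpower_pow. lra.
    - apply Rdiv_lt_0_compat; lra.
    - lra. }
  assert (Hb := bern (L^w) th ltac:(lra) Hth). fold a in Hb.
  assert (Hp : 0 < Rpower (1 + L^w) th) by (unfold Rpower; apply exp_pos).
  assert (Hq : 0 < Rpower ((1 + L) ^ w / (1 + L ^ w)) th) by (unfold Rpower; apply exp_pos).
  unfold Phi. fold L S.
  apply Rle_trans with ((1+L)^v / a).
  - apply div_le_div; lra.
  - rewrite <- R1. unfold Rdiv.
    apply Rmult_le_reg_r with a; [lra|].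
    rewrite Rmult_assoc, Rinv_l, Rmult_1_r by lra.
    apply Rmult_le_compat_l; lra.
Qed.
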